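(* Let $n>3$ and let $G_n$ be the directed graph with nodes $0,\dots,n-1$ and arcs $i\to i+1$ for $0\le i\le n-2$, $j\to 0$ for $1\le j\le n-1$, and $0\to n-1$. Let $\pi\in S_n$ and $\rho=\pi^{-1}$. The following are equivalent: (1) $\rho(0)<\rho(n-1)<\rho(1)$ or $\rho(1)<\rho(n-1)<\rho(0)$; (2) there is no $\mathbf y\in\mathbb{R}^{n-1}$ with $(\Xi R_\pi C_{G_n})^T\mathbf y=\mathbf 0$, $\mathbf y\ge\mathbf 0$ and $\mathbf y\ne\mathbf 0$.
   Context: $d_G(x,y)$ is the shortest directed path length from $x$ to $y$ ($\infty$ if none). The distance-count matrix $C_G\in\mathbb{R}^{n\times n}$ has $(C_G)_{i,k}=|\{j: d_G(j,i)=k\}|$ (indices from 0). $R_\pi$ is the $n\times n$ 0/1 matrix with $(R_\pi)_{ij}=1$ iff $\pi(i)=j$. $\Xi\in\mathbb{R}^{(n-1)\times n}$ has $\Xi_{i,i}=-1$, $\Xi_{i,i+1}=1$ for $0\le i\le n-2$, and all other entries $0$. Vector inequalities are entrywise. *)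

(* Defs.v *)
From HB Require Import structures.
From mathcomp Require Import all_boot all_order all_algebra all_fingroup.
From mathcomp Require Import all_classical all_reals.
Set Implicit Arguments. Unset Strict Implicit. Unset Printing Implicit Defensive.
Import Order.TTheory GRing.Theory Num.Theory.
Local Open Scope ring_scope.

Definition Gn_arc (n : nat) : rel 'I_n := fun i j =>
  [|| (val j == (val i).+1)%N,
      (val i != 0%N) && (val j == 0%N)
    | (val i == 0%N) && (val j == n.-1)].

Fixpoint walk (T : finType) (e : rel T) (k : nat) (x y : T) : bool :=
  if k is k'.+1 then [exists z, e x z && walk e k' z y] else x == y.

(* dist_is e x y k : d_G(x,y) = k, i.e. the shortest directed path from x to y
   has length k (a finite value).  If y is unreachable, no k satisfies it
   (d = infinity). *)
Definition dist_is (T : finType) (e : rel T) (x y : T) (k : nat) : bool :=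
  walk e k x y && [forall m : 'I_k, ~~ walk e m x y].

Definition distcount (R : nzRingType) (n : nat) (e : rel 'I_n) : 'M[R]_n :=
  \matrix_(i < n, k < n) (#|[set j : 'I_n | dist_is e j i k]|)%:R.

Definition permmx (R : nzRingType) (n : nat) (s : 'S_n) : 'M[R]_n :=
  \matrix_(i < n, j < n) (s i == j)%:R.

Definition Ximx (R : nzRingType) (n : nat) : 'M[R]_(n.-1, n) :=
  \matrix_(i < n.-1, j < n)
    (if (val j == val i)%N then -1 else if (val j == (val i).+1)%N then 1 else 0).

(* rho(k) = pi^{-1}(k) as a natural number, for k < n (0 otherwise, unused). *)
Definition rhon (n : nat) (s : 'S_n) (k : nat) : nat :=
  if insub k is Some i then val ((s^-1)%g i) else 0%N.

(* Main.v *)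
Require Import Defs.
From HB Require Import structures.
From mathcomp Require Import all_boot all_order all_algebra all_fingroup.
From mathcomp Require Import all_classical all_reals.
From mathcomp Require Import zify ring lra.
Import Order.TTheory GRing.Theory Num.Theory.

Definition dd (N x y : nat) : nat :=
  if x == y then 0 else if y == 0 then 1
  else if y == N.-1 then (if (x == 0) || (x == N.-2) then 1 else 2)
  else if x < y then y - x else y.+1.

Lemma tri N x z y : 3 < N -> x < N -> z < N -> y < N ->
  [|| z == x.+1, (x != 0) && (z == 0) | (x == 0) && (z == N.-1)] ->
  dd N x y <= (dd N z y).+1.
Proof. rewrite /dd => *. repeat case: ifP => ?; lia. Qed.

Lemma walk_lb m k (x y : 'I_m.+4) : walk (@Gn_arc m.+4) k x y -> dd m.+4 x y <= k.
Proof.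
elim: k x => [|k IH] x /=.
  by move/eqP=> ->; rewrite /dd eqxx.
case/existsP=> z /andP[a w].
have h1 := IH z w.
have h2 := @tri m.+4 x z y isT (ltn_ord x) (ltn_ord z) (ltn_ord y) a.
lia.
Qed.

Lemma walk_cat m a b (x z y : 'I_m.+4) :
  walk (@Gn_arc m.+4) a x z -> walk (@Gn_arc m.+4) b z y -> walk (@Gn_arc m.+4) (a + b) x y.
Proof.
elim: a x => [|a IH] x /=.
  by move/eqP=> ->.
case/existsP=> u /andP[e w] w2; apply/existsP; exists u; rewrite e /=.
exact: IH w w2.
Qed.

Lemma walk1 m (x z : 'I_m.+4) : Gn_arc x z -> walk (@Gn_arc m.+4) 1 x z.
Proof. by move=> a /=; apply/existsP; exists z; rewrite a eqxx. Qed.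

Lemma walk_chain m d i : i + d < m.+4 ->
  walk (@Gn_arc m.+4) d (inord i) (inord (i + d)).
Proof.
elim: d i => [|d IH] i H /=; first by rewrite addn0.
apply/existsP; exists (inord i.+1); apply/andP; split.
  rewrite /Gn_arc /= !inordK; lia.
rewrite -addSnnS; apply: IH; lia.
Qed.

Lemma walk_ub m (x y : 'I_m.+4) : walk (@Gn_arc m.+4) (dd m.+4 x y) x y.
Proof.
have hx := ltn_ord x; have hy := ltn_ord y.
have a0 : forall u : 'I_m.+4, val u != 0 -> Gn_arc u (inord 0).
  by move=> u hu; rewrite /Gn_arc /= inordK // hu eqxx orbT.
rewrite /dd; case: eqP => [/val_inj -> /=|nxy]; first by [].
case: eqP => [y0|ny0].
  have -> : y = inord 0 by apply: val_inj; rewrite /= inordK.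
  apply: walk1; apply: a0; apply/eqP => x0; apply: nxy. simpl in *; lia.
case: eqP => [yN|nyN].
  case: ifP => h.
    apply: walk1; rewrite /Gn_arc /= yN. case/orP: h => /eqP ->; lia.
  have -> : 2 = 1 + 1 by [].
  apply: (@walk_cat _ _ _ _ (inord 0)).
    apply: walk1; apply: a0; apply/eqP => x0; rewrite x0 in h; by [].
  apply: walk1; rewrite /Gn_arc /= inordK // yN; lia.
case: ifP => h.
  have := @walk_chain m (y - x) x; rewrite subnKC; last lia.
  by rewrite !inord_val; apply; lia.
have -> : y.+1 = 1 + (0 + y) by [].
apply: (@walk_cat _ _ _ _ (inord 0)).
  apply: walk1; apply: a0; apply/eqP => x0; rewrite x0 in h; lia.
by have := @walk_chain m y 0; rewrite inord_val; apply; lia.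
Qed.

Lemma dist_isE m (x y : 'I_m.+4) k : dist_is (@Gn_arc m.+4) x y k = (dd m.+4 x y == k).
Proof.
apply/idP/idP.
  case/andP=> w /forallP H; rewrite eqn_leq walk_lb //=.
  rewrite leqNgt; apply/negP => lt; have := H (Ordinal lt); by rewrite walk_ub.
move/eqP=> <-; rewrite /dist_is walk_ub /=; apply/forallP=> i; apply/negP=> w.
by have := walk_lb _ _ _ _ w; rewrite leqNgt ltn_ord.
Qed.

Lemma card_count N (P : pred nat) : #|[set x : 'I_N | P (val x)]| = count P (iota 0 N).
Proof.
rewrite cardsE cardE /enum_mem size_filter -enumT /=.
rewrite -val_enum_ord count_map. by apply: eq_count.
Qed.
Lemma count_int N a b (P : pred nat) : a <= b <= N ->
  (forall x, x < N -> P x = (a <= x < b)) -> count P (iota 0 N) = b - a.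
Proof.
move=> hab H.
rewrite (eq_in_count (a2 := fun x => a <= x < b)); last first.
  by move=> x; rewrite mem_iota add0n => /H.
have -> : N = a + ((b - a) + (N - b)) by lia.
rewrite iotaD iotaD !count_cat add0n.
rewrite (eq_in_count (a1 := fun x => a <= x < b) (a2 := pred0) (s := iota 0 a)); last first.
  by move=> x; rewrite mem_iota /=; lia.
rewrite (eq_in_count (a1 := fun x => a <= x < b) (a2 := predT) (s := iota a _)); last first.
  by move=> x; rewrite mem_iota /=; lia.
rewrite (eq_in_count (a1 := fun x => a <= x < b) (a2 := pred0) (s := iota (a + _) _)); last first.
  by move=> x; rewrite mem_iota /=; lia.
by rewrite !count_pred0 count_predT size_iota add0n addn0.
Qed.
Definition cnt (N j k : nat) : nat :=
  if j == 0 then (if k == 0 then 1 else if k == 1 then N.-1 else 0)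
  else if j == N.-1 then (if k == 0 then 1 else if k == 1 then 2 else if k == 2 then N - 3 else 0)
  else (if k <= j then 1 else if k == j.+1 then N.-1 - j else 0).
Lemma count_two N (P : pred nat) : 3 < N ->
  (forall x, x < N -> P x = (x == 0) || (x == N.-2)) -> count P (iota 0 N) = 2.
Proof.
move=> hN H.
rewrite (eq_in_count (a2 := predU (fun x => 0 <= x < 1) (fun x => N.-2 <= x < N.-1))); last first.
  by move=> x; rewrite mem_iota add0n => /H ->; rewrite /=; apply/idP/idP; lia.
set a1 := (fun x => 0 <= x < 1).
set a2 := (fun x => N.-2 <= x < N.-1).
have h1 : count a1 (iota 0 N) = 1 by rewrite (@count_int N 0 1) //; lia.
have h2 : count a2 (iota 0 N) = 1.
  by rewrite (@count_int N N.-2 N.-1) //; try lia; move=> x _; rewrite /a2; lia.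
have h3 : count (predI a1 a2) (iota 0 N) = 0.
  rewrite (@count_int N 0 0) //; try lia. move=> x _ /=; rewrite /a1 /a2; apply/idP/idP; lia.
have e := count_predUI a1 a2 (iota 0 N). rewrite h1 h2 h3 addn0 in e; exact: e.
Qed.
Lemma cntE N j k : 3 < N -> j < N -> k < N ->
  count (fun x => dd N x j == k) (iota 0 N) = cnt N j k.
Proof.
move=> hN hj hk; rewrite /cnt.
case: ifP => j0.
  case: ifP => k0. rewrite (@count_int N 0 1); try lia; move=> x hx; rewrite /dd; apply/idP/idP; repeat case: ifP => ?; lia.
  case: ifP => k1. rewrite (@count_int N 1 N); try lia; move=> x hx; rewrite /dd; apply/idP/idP; repeat case: ifP => ?; lia.
  rewrite (@count_int N 0 0); try lia; move=> x hx; rewrite /dd; apply/idP/idP; repeat case: ifP => ?; lia.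
case: ifP => jN.
  case: ifP => k0. rewrite (@count_int N N.-1 N); try lia; move=> x hx; rewrite /dd; apply/idP/idP; repeat case: ifP => ?; lia.
  case: ifP => k1. apply: count_two; try lia; move=> x hx; rewrite /dd; apply/idP/idP; repeat case: ifP => ?; lia.
  case: ifP => k2. rewrite (@count_int N 1 N.-2); try lia; move=> x hx; rewrite /dd; apply/idP/idP; repeat case: ifP => ?; lia.
  rewrite (@count_int N 0 0); try lia; move=> x hx; rewrite /dd; apply/idP/idP; repeat case: ifP => ?; lia.
case: ifP => kj. rewrite (@count_int N (j-k) (j-k).+1); try lia; move=> x hx; rewrite /dd; apply/idP/idP; repeat case: ifP => ?; lia.
case: ifP => kj1. rewrite (@count_int N j.+1 N); try lia; move=> x hx; rewrite /dd; apply/idP/idP; repeat case: ifP => ?; lia.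
rewrite (@count_int N 0 0); try lia; move=> x hx; rewrite /dd; apply/idP/idP; repeat case: ifP => ?; lia.
Qed.

Lemma distcountE (R : nzRingType) m (j k : 'I_m.+4) :
  distcount R (@Gn_arc m.+4) j k = ((cnt m.+4 j k)%:R)%R.
Proof.
rewrite mxE.
have -> : [set x | dist_is (@Gn_arc m.+4) x j k] = [set x : 'I_m.+4 | (fun v => dd m.+4 v j == k) (val x)].
  by apply/setP => x; rewrite !inE dist_isE.
by rewrite (@card_count m.+4 (fun v => dd m.+4 v j == k)) cntE.
Qed.

Lemma cnt_hi N j k : 3 < N -> j < N -> k < N -> 3 <= k ->
  cnt N j k = if j == k.-1 then N - k else if (k <= j) && (j <= N - 2) then 1 else 0.
Proof. move=> *; rewrite /cnt; repeat case: ifP => ?; lia. Qed.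
Lemma cnt_0 N j : cnt N j 0 = 1.
Proof. rewrite /cnt; repeat case: ifP => ?; lia. Qed.
Lemma cnt_2 N j : 3 < N -> j < N ->
  cnt N j 2 = if j == 0 then 0 else if j == 1 then N - 2 else if j == N.-1 then N - 3 else 1.
Proof. move=> *; rewrite /cnt; repeat case: ifP => ?; lia. Qed.
Lemma cnt_rel N k : 3 < N -> k < N ->
  cnt N 0 k + (N - 3) * cnt N 1 k = (N - 2) * cnt N N.-1 k.
Proof. move=> *; rewrite /cnt; repeat case: ifP => ?; nia. Qed.

Local Open Scope ring_scope.
Set Implicit Arguments. Unset Strict Implicit.
Ltac slia := simpl in *; lia.

Lemma sum_pick (R : nzRingType) N (a : nat) (f : R) :
  \sum_(p < N) (if val p == a then f else 0) = if (a < N)%N then f else 0.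
Proof.
case: (ltnP a N) => h.
  rewrite (bigD1 (Ordinal h)) //= eqxx big1 ?addr0 // => p hp.
  case: eqP => // e; exfalso; move/negP: hp; apply; apply/eqP/val_inj => /=; exact: e.
by apply: big1 => p _; case: eqP => // e; have := ltn_ord p; simpl in *; lia.
Qed.

Lemma Xi_sum (R : nzRingType) m (i : 'I_m.+3) (F : 'I_m.+4 -> R) :
  \sum_(p < m.+4) Ximx R m.+4 i p * F p = F (inord i.+1) - F (inord i).
Proof.
have E : forall p : 'I_m.+4, Ximx R m.+4 i p * F p =
   (if val p == i then - F (inord i) else 0) + (if val p == i.+1 then F (inord i.+1) else 0).
  move=> p; rewrite mxE.
  case: eqP => [e|ne]; first by rewrite ifN; [rewrite -e inord_val mulN1r addr0|slia].
  by case: eqP => [e|ne2]; rewrite ?mul1r ?mul0r ?add0r // -e inord_val.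
rewrite (eq_bigr _ (fun p _ => E p)) big_split /= !sum_pick.
have hi := ltn_ord i. rewrite !ifT; [by rewrite addrC|lia|lia].
Qed.

Lemma perm_mul (R : nzRingType) m (pi : 'S_m.+4) (A : 'M[R]_m.+4) p k :
  (permmx R pi *m A) p k = A (pi p) k.
Proof.
rewrite mxE (bigD1 (pi p)) //= mxE eqxx mul1r big1 ?addr0 // => q hq.
by rewrite mxE eq_sym (negbTE hq) mul0r.
Qed.

Lemma Mentry (R : nzRingType) m (pi : 'S_m.+4) (A : 'M[R]_m.+4) (i : 'I_m.+3) k :
  (Ximx R m.+4 *m permmx R pi *m A) i k = A (pi (inord i.+1)) k - A (pi (inord i)) k.
Proof.
rewrite -mulmxA mxE.
rewrite (eq_bigr (fun p => Ximx R m.+4 i p * (fun q => A (pi q) k) p)); last by move=> p _; rewrite perm_mul.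
by rewrite Xi_sum.
Qed.

Definition Yf (R : nzRingType) m (y : 'cV[R]_m.+3) (p : nat) : R :=
  if (p < m.+3)%N then y (inord p) 0 else 0.
Definition zf (R : nzRingType) m (y : 'cV[R]_m.+3) (p : nat) : R :=
  (if p is p'.+1 then Yf y p' else 0) - Yf y p.

Lemma Bsum (R : comNzRingType) m (pi : 'S_m.+4) (y : 'cV[R]_m.+3) (h : 'I_m.+4 -> R) :
  \sum_(i < m.+3) y i 0 * (h (pi (inord i.+1)) - h (pi (inord i))) =
  \sum_(j < m.+4) zf y (val ((pi^-1)%g j)) * h j.
Proof.
rewrite (reindex_inj (@perm_inj _ pi)) /=.
under [RHS]eq_bigr do rewrite permK.
set H := fun p : nat => h (pi (inord p)).
have -> : \sum_(j < m.+4) zf y j * h (pi j) = \sum_(0 <= p < m.+4) zf y p * H p.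
  rewrite big_mkord; apply: eq_bigr => p _; by rewrite /H inord_val.
have -> : \sum_(i < m.+3) y i 0 * (h (pi (inord i.+1)) - h (pi (inord i)))
   = \sum_(0 <= i < m.+3) Yf y i * (H i.+1 - H i).
  rewrite big_mkord; apply eq_bigr => i _; by rewrite /Yf ltn_ord inord_val.
rewrite [RHS](big_nat_recl _ _ _ (leq0n _)).
under [X in _ = _ + X]eq_bigr do rewrite [zf _ _]/zf mulrBl.
rewrite [LHS](eq_bigr (fun i => Yf y i * H i.+1 - Yf y i * H i)); last by move=> *; rewrite mulrBr.
rewrite !sumrB.
rewrite [\sum_(0 <= i < m.+3) Yf y i * H i](big_nat_recl _ _ _ (leq0n _)).
rewrite [\sum_(0 <= i < m.+3) Yf y i.+1 * H i.+1](big_nat_recr _ _ _ (leq0n _)) /=.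
have -> : Yf y m.+3 = 0 by rewrite /Yf ltnn.
rewrite /zf /=. ring.
Qed.

Lemma yrec (R : comNzRingType) m (pi : 'S_m.+4) (y : 'cV[R]_m.+3) (q : 'I_m.+3) :
  y q 0 = \sum_(j < m.+4) zf y (val ((pi^-1)%g j)) * ((q < val ((pi^-1)%g j))%N)%:R.
Proof.
rewrite -(Bsum pi y (fun j => ((q < val ((pi^-1)%g j))%N)%:R)).
have e1 : forall i : 'I_m.+3, val (inord i.+1 : 'I_m.+4) = i.+1.
  by move=> i; rewrite /= inordK // ltnS ltn_ord.
have e2 : forall i : 'I_m.+3, val (inord i : 'I_m.+4) = i.
  by move=> i; rewrite /= inordK //; apply: leqW (ltn_ord i).
under eq_bigr do rewrite !permK e1 e2.
rewrite (bigD1 q) //= big1.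
  by rewrite ltnSn ltnn subr0 mulr1 addr0.
move=> i ne; have ne' : val i != val q by [].
case: (ltngtP q i) => h.
- by rewrite ltnS (ltnW h) subrr mulr0.
- by rewrite ltnS leqNgt h /= subrr mulr0.
- by move: ne'; rewrite /= h eqxx.
Qed.

Lemma tele (R : nzRingType) m (G : nat -> R) r : (r <= m.+3)%N ->
  \sum_(i < m.+3) ((i < r)%N)%:R * (G i.+1 - G i) = G r - G 0.
Proof.
move=> hr.
rewrite -(big_mkord xpredT (fun i : nat => ((i < r)%N)%:R * (G i.+1 - G i))).
rewrite (big_cat_nat _ (n:=r)) //=.
rewrite [X in _ + X]big_nat_cond [X in _ + X]big1 ?addr0; last first.
  by move=> i /andP[/andP[ri _] _]; rewrite ltnNge ri mul0r.
rewrite -telescope_sumr //.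
by apply: eq_big_nat => i /andP[_ ir]; rewrite ir mul1r.
Qed.

Lemma MTy (R : comNzRingType) m (pi : 'S_m.+4) (y : 'cV[R]_m.+3) (k : 'I_m.+4) :
  ((Ximx R m.+4 *m permmx R pi *m distcount R (@Gn_arc m.+4))^T *m y) k 0 =
  \sum_(j < m.+4) zf y (val ((pi^-1)%g j)) * ((cnt m.+4 j k)%:R).
Proof.
rewrite mxE.
under eq_bigr do rewrite mxE Mentry mulrC.
rewrite (Bsum pi y (fun j => distcount R (@Gn_arc m.+4) j k)).
by under eq_bigr do rewrite distcountE.
Qed.

Lemma ord_neq m (i : 'I_m.+4) a : (a < m.+4)%N -> (i != inord a) = (val i != a).
Proof. by move=> ha; rewrite -(inj_eq val_inj); rewrite /= inordK. Qed.

Lemma sum3 (R : nzRingType) m (F : 'I_m.+4 -> R) :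
  (forall j : 'I_m.+4, (2 <= j <= m.+2)%N -> F j = 0) ->
  \sum_j F j = F (inord 0) + F (inord 1) + F (inord m.+3).
Proof.
move=> H.
rewrite (bigD1 (inord 0)) // (bigD1 (inord 1)) /=; last by rewrite ord_neq //= inordK.
rewrite (bigD1 (inord m.+3)) /=; last by rewrite !ord_neq //= !inordK.
rewrite big1 ?addr0 ?addrA // => i /andP[/andP[h0 h1] h3].
apply: H; rewrite !ord_neq // in h0 h1 h3; have := ltn_ord i; slia.
Qed.

Lemma rhon_ord m (pi : 'S_m.+4) k : (k < m.+4)%N -> rhon pi k = val ((pi^-1)%g (inord k)).
Proof.
move=> hk; rewrite /rhon insubT /=; congr (val ((pi^-1)%g _)); apply: val_inj; by rewrite /= inordK.
Qed.

Definition pos m (pi : 'S_m.+4) k := val ((pi^-1)%g (inord k : 'I_m.+4)).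

Lemma natS2 (R : numDomainType) m : (m.+2)%:R = m%:R + 2 :> R.
Proof. by rewrite -addn2 natrD. Qed.
Lemma natS1 (R : numDomainType) m : (m.+1)%:R = m%:R + 1 :> R.
Proof. by rewrite -addn1 natrD. Qed.

Lemma dir1 (R : realType) m (pi : 'S_m.+4) (y : 'cV[R]_m.+3) :
  (pos pi 0 < pos pi m.+3 < pos pi 1)%N || (pos pi 1 < pos pi m.+3 < pos pi 0)%N ->
  (Ximx R m.+4 *m permmx R pi *m distcount R (@Gn_arc m.+4))^T *m y = 0 ->
  (forall i, 0 <= y i 0) -> y = 0.
Proof.
move=> H1 HM Hnn.
set w := fun j : 'I_m.+4 => zf y (val ((pi^-1)%g j)).
have Hk : forall k : 'I_m.+4, \sum_j w j * (cnt m.+4 j k)%:R = 0.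
  by move=> k; rewrite -MTy HM mxE.
have A : forall d j, (2 <= j)%N -> (m.+3 - d <= j)%N -> (j <= m.+2)%N -> w (inord j) = 0.
  elim=> [|d IH] j h2 hd hj; first lia.
  case: (leqP (m.+3 - d) j) => hjd; first exact: IH.
  have := Hk (inord j.+1).
  rewrite (eq_bigr (fun i => if val i == j then (m.+3 - j)%:R * w (inord j) else 0)).
    rewrite sum_pick ifT; last lia.
    move/eqP; rewrite mulf_eq0 pnatr_eq0 => /orP[/eqP|/eqP //]; lia.
  move=> i _; rewrite inordK; last lia.
  rewrite (@cnt_hi m.+4 i j.+1) ?ltn_ord //; try lia.
  rewrite /=; case: eqP => [e|ne].
    by rewrite -e inord_val mulrC subSS.
  case: ifP => [/andP[h1 h3]|_]; last by rewrite mulr0.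
  have : w (inord i) = 0 by apply: IH; lia.
  by rewrite inord_val => ->; rewrite mul0r.
have A' : forall j : 'I_m.+4, (2 <= j <= m.+2)%N -> w j = 0.
  move=> j /andP[h1 h2]; rewrite -(inord_val j); apply: (A m.+3) => //; lia.
have c00 : cnt m.+4 0 0 = 1%N by [].
have c02 : cnt m.+4 0 2 = 0%N by [].
have c12 : cnt m.+4 1 2 = m.+2 by [].
have cN2 : cnt m.+4 m.+3 2 = m.+1 by rewrite /cnt /= eqxx; lia.
have S0 : w (inord 0) + w (inord 1) + w (inord m.+3) = 0.
  have := Hk (inord 0); rewrite (@sum3 _ _ (fun j => w j * (cnt m.+4 j (inord 0))%:R)); last first.
    by move=> j hj; rewrite A' // mul0r.
  by rewrite !inordK // !cnt_0 !mulr1.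
have S2 : w (inord 1) * (m.+2)%:R + w (inord m.+3) * (m.+1)%:R = 0.
  have := Hk (inord 2); rewrite (@sum3 _ _ (fun j => w j * (cnt m.+4 j (inord 2))%:R)); last first.
    by move=> j hj; rewrite A' // mul0r.
  by rewrite !inordK // c02 c12 cN2 mulr0 add0r.
have Yq : forall q : 'I_m.+3, y q 0 = w (inord 0) * ((q < pos pi 0)%N)%:R
    + w (inord 1) * ((q < pos pi 1)%N)%:R + w (inord m.+3) * ((q < pos pi m.+3)%N)%:R.
  move=> q; rewrite (yrec pi) (@sum3 _ _ (fun j => w j * ((q < val ((pi^-1)%g j))%N)%:R)) //.
  by move=> j hj; rewrite A' // mul0r.
move: S0 S2 Yq H1.
rewrite /pos.
have : (val ((pi^-1)%g (inord 0 : 'I_m.+4)) < m.+4)%N by apply: ltn_ord.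
have : (val ((pi^-1)%g (inord 1 : 'I_m.+4)) < m.+4)%N by apply: ltn_ord.
have : (val ((pi^-1)%g (inord m.+3 : 'I_m.+4)) < m.+4)%N by apply: ltn_ord.
move: (val ((pi^-1)%g (inord 0 : 'I_m.+4))) (val ((pi^-1)%g (inord 1 : 'I_m.+4))) (val ((pi^-1)%g (inord m.+3 : 'I_m.+4))) => p0 p1 pm.
move: (w (inord 0)) (w (inord 1)) (w (inord m.+3)) => a b t.
move=> hpm hp1 hp0 S0 S2 Yq H1.
rewrite natS2 natS1 in S2.
have hm : 0 <= m%:R :> R by [].
have [a0 [b0 t0]] : a = 0 /\ b = 0 /\ t = 0.
  case/orP: H1 => /andP[h1 h2].
  - have hq1 : (pm < m.+3)%N by lia.
    have hq2 : (p0 < m.+3)%N by lia.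
    have N1 := Hnn (Ordinal hq1); have N2 := Hnn (Ordinal hq2).
    rewrite Yq /= ltnn h2 (_ : (pm < p0)%N = false) in N1; last lia.
    rewrite Yq /= ltnn h1 (ltn_trans h1 h2) in N2.
    rewrite /= !mulr0 !mulr1 ?addr0 ?add0r in N1 N2.
    have t0 : t = 0 by nra.
    have b0 : b = 0 by nra.
    split; [lra|by []].
  - have hq1 : (pm < m.+3)%N by lia.
    have hq2 : (p1 < m.+3)%N by lia.
    have N1 := Hnn (Ordinal hq1); have N2 := Hnn (Ordinal hq2).
    rewrite Yq /= ltnn h2 (_ : (pm < p1)%N = false) in N1; last lia.
    rewrite Yq /= ltnn h1 (ltn_trans h1 h2) in N2.
    rewrite /= !mulr0 !mulr1 ?addr0 ?add0r in N1 N2.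
    have t0 : t = 0 by nra.
    have a0 : a = 0 by nra.
    split; [by []|lra].
apply/matrixP => q l; rewrite (ord1 l) Yq a0 b0 t0 !mul0r !addr0 mxE //.
Qed.

Lemma pos_neq m (pi : 'S_m.+4) a b : (a < m.+4)%N -> (b < m.+4)%N -> a != b -> pos pi a != pos pi b.
Proof.
move=> ha hb ne; rewrite /pos (inj_eq val_inj) (inj_eq (@perm_inj _ _)).
by rewrite -(inj_eq val_inj) /= !inordK.
Qed.

Lemma dir2 (R : realType) m (pi : 'S_m.+4) :
  ~~ ((pos pi 0 < pos pi m.+3 < pos pi 1)%N || (pos pi 1 < pos pi m.+3 < pos pi 0)%N) ->
  exists y : 'cV[R]_m.+3,
    ((Ximx R m.+4 *m permmx R pi *m distcount R (@Gn_arc m.+4))^T *m y = 0) /\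
    (forall i, 0 <= y i 0) /\ y != 0.
Proof.
move=> Hn.
set t : R := if (pos pi m.+3 < pos pi 0)%N then -1 else 1.
set W := fun j : 'I_m.+4 => if val j == 0%N then - t else if val j == 1%N then - ((m.+1)%:R * t)
   else if val j == m.+3 then (m.+2)%:R * t else 0.
have HW : forall j : 'I_m.+4, (2 <= j <= m.+2)%N -> W j = 0.
  move=> j /andP[h1 h2]; rewrite /W; repeat case: eqP => ?; try slia; by [].
have W0 : W (inord 0) = - t by rewrite /W /= inordK.
have W1 : W (inord 1) = - ((m.+1)%:R * t) by rewrite /W /= inordK.
have WN : W (inord m.+3) = (m.+2)%:R * t by rewrite /W /= inordK //= eqxx.
set y : 'cV[R]_m.+3 := \col_(q < m.+3) \sum_j W j * ((q < val ((pi^-1)%g j))%N)%:R.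
have Yq : forall q : 'I_m.+3, y q 0 = - t * ((q < pos pi 0)%N)%:R
    - ((m.+1)%:R * t) * ((q < pos pi 1)%N)%:R + (m.+2)%:R * t * ((q < pos pi m.+3)%N)%:R.
  move=> q; rewrite mxE (@sum3 _ _ (fun j => W j * ((q < val ((pi^-1)%g j))%N)%:R)).
    by rewrite W0 W1 WN mulNr /pos mulNr.
  by move=> j hj; rewrite HW // mul0r.
exists y; split.
  apply/matrixP => k l; rewrite (ord1 l) [RHS]mxE mxE.
  set g := fun p : nat => distcount R (@Gn_arc m.+4) (pi (inord p)) k.
  have -> : \sum_(i < m.+3) ((Ximx R m.+4 *m permmx R pi *m distcount R (@Gn_arc m.+4))^T) k i * y i 0
     = \sum_(i < m.+3) \sum_(j < m.+4) W j * (((i < val ((pi^-1)%g j))%N)%:R * (g i.+1 - g i)).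
    apply: eq_bigr => i _; rewrite [(_^T) k i]mxE Mentry [y i 0]mxE mulr_sumr; apply: eq_bigr => j _.
    by rewrite /g; ring.
  rewrite exchange_big /=.
  have -> : \sum_(j < m.+4) \sum_(i < m.+3) W j * (((i < val ((pi^-1)%g j))%N)%:R * (g i.+1 - g i))
     = \sum_(j < m.+4) W j * (distcount R (@Gn_arc m.+4) j k - g 0%N).
    apply: eq_bigr => j _; rewrite -mulr_sumr tele; last by rewrite -ltnS ltn_ord.
    by rewrite /g inord_val permKV.
  rewrite (@sum3 _ _ (fun j => W j * (distcount R (@Gn_arc m.+4) j k - g 0%N))); last first.
    by move=> j hj; rewrite HW // mul0r.
  rewrite W0 W1 WN !distcountE !inordK //.
  have E := @cnt_rel m.+4 k isT (ltn_ord k).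
  rewrite (_ : (m.+4 - 3 = m.+1)%N) // (_ : (m.+4 - 2 = m.+2)%N) // in E.
  have E' := congr1 (fun n => n%:R : R) E; rewrite /= natrD !natrM in E'.
  move: E'; set c0 := (cnt m.+4 0 k)%:R; set c1 := (cnt m.+4 1 k)%:R; set cN := (cnt m.+4 m.+3 k)%:R.
  move=> E'.
  have E2 : c0 = (m.+2)%:R * cN - (m.+1)%:R * c1 by rewrite -E'; ring.
  rewrite E2; ring.
have hp0 : (pos pi 0 < m.+4)%N by apply: ltn_ord.
have hp1 : (pos pi 1 < m.+4)%N by apply: ltn_ord.
have hpm : (pos pi m.+3 < m.+4)%N by apply: ltn_ord.
have d01 := @pos_neq m pi 0 1 isT isT isT.
have d0N := @pos_neq m pi 0 m.+3 isT (ltnSn m.+3) isT.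
have d1N := @pos_neq m pi 1 m.+3 isT (ltnSn m.+3) isT.
rewrite /t in Yq; clearbody y; clear W0 W1 WN HW W t.
move: Yq Hn hp0 hp1 hpm d01 d0N d1N.
move: (pos pi 0) (pos pi 1) (pos pi m.+3) => p0 p1 pm Yq Hn hp0 hp1 hpm d01 d0N d1N.
have hm : 0 <= m%:R :> R by [].
case: (ltnP pm p0) => h in Yq *.
- have h1 : (pm < p1)%N by lia.
  split.
    move=> q; rewrite Yq; case: (ltnP q p0) => ?; case: (ltnP q p1) => ?; case: (ltnP q pm) => ? /=;
      first [lia | (rewrite ?natS1 ?natS2 /= ?mulr1n ?mulr0n; lra)].
  apply/negP => /eqP y0. have hq : (pm < m.+3)%N by lia.
  have := Yq (Ordinal hq); rewrite y0 mxE /= ltnn h h1 /= ?natS1 ?natS2 /= ?mulr1n ?mulr0n; lra.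
- have h0 : (p0 < pm)%N by lia.
  have h1 : (p1 < pm)%N by lia.
  split.
    move=> q; rewrite Yq; case: (ltnP q p0) => ?; case: (ltnP q p1) => ?; case: (ltnP q pm) => ? /=;
      first [lia | (rewrite ?natS1 ?natS2 /= ?mulr1n ?mulr0n; lra)].
  apply/negP => /eqP y0. have hq : (pm.-1 < m.+3)%N by lia.
  have := Yq (Ordinal hq); rewrite y0 mxE /=.
  rewrite (_ : (pm.-1 < p0)%N = false); last lia.
  rewrite (_ : (pm.-1 < p1)%N = false); last lia.
  rewrite (_ : (pm.-1 < pm)%N = true); last lia.
  rewrite /= ?natS1 ?natS2 /= ?mulr1n ?mulr0n; lra.
Qed.

Theorem theorem7 (R : realType) (n : nat) (hn : (3 < n)%N) (pi : 'S_n) :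
  ((rhon pi 0 < rhon pi n.-1 < rhon pi 1)%N \/
   (rhon pi 1 < rhon pi n.-1 < rhon pi 0)%N)
  <->
  ~ (exists y : 'cV[R]_(n.-1),
       ((Ximx R n *m permmx R pi *m distcount R (@Gn_arc n))^T *m y = 0) /\
       (forall i, 0 <= y i 0) /\ y != 0).
Proof.
case: n hn pi => [|[|[|[|m]]]] // _ pi.
rewrite /= !rhon_ord ?ltnSn //.
split.
  move=> H [y [HM [Hnn Hnz]]].
  have y0 : y = 0.
    apply: (dir1 (pi:=pi)) => //.
    by case: H => ->; rewrite ?orbT.
  by rewrite y0 eqxx in Hnz.
move=> Hno.
case E: ((pos pi 0 < pos pi m.+3 < pos pi 1)%N || (pos pi 1 < pos pi m.+3 < pos pi 0)%N).
  by case/orP: E => [h|h]; [left|right].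
exfalso; apply: Hno; apply: dir2; by rewrite E.
Qed.
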